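(* Suppose the event $E_{\tau,small}$ described in the context occurs. Let $\kappa_g>0$ be an upper bound for $\{\|g_k\|_2\}$. Then, with $\kappa_d>0$ as in the context, for any $k \geq \bar k_{\tau,\xi}$, \[ \mathbb{E}_k[\bar\alpha_k \bar\tau_k g_k^T (\bar d_k - d_k)] \leq \beta_k^2\, \theta\, \bar\tau_{\min}\, \kappa_g\, \kappa_d \sqrt{M}. \]
   Context: Problem: $\min_{x\in\mathbb{R}^n} f(x)$ s.t. $c(x)=0$, with $f(x)=\mathbb{E}[F(x,\omega)]$, $c:\mathbb{R}^n\to\mathbb{R}^m$ deterministic. Assumptions: there is an open convex set $\mathcal{X}$ containing all iterates and trial points; $f$ is continuously differentiable and bounded below over $\mathcal{X}$, $\nabla f$ is bounded and Lipschitz with constant $L$ over $\mathcal{X}$; $c$ and its Jacobian $J=\nabla c^T$ are bounded over $\mathcal{X}$, each $\nabla c_i$ is Lipschitz with constant $\gamma_i$, $\Gamma:=\sum_{i=1}^m\gamma_i$, and the singular values of $J$ are bounded away from zero over $\mathcal{X}$. The deterministic matrices $H_k\in\mathbb{S}^n$ satisfy $\|H_k\|_2\le\kappa_H$ and $u^TH_ku\ge\zeta\|u\|_2^2$ for all $u$ with $J_ku=0$. Notation: $g_k=\nabla f(x_k)$, $c_k=c(x_k)$, $J_k=\nabla c(x_k)^T$; $\bar g_k$ is a stochastic gradient estimate. Model reduction $\Delta q(x,\tau,g,H,d)=-\tau(g^Td+\tfrac12\max\{d^THd,0\})+\|c(x)\|_1$. Algorithm (stochastic SQP, inputs $\bar\tau_{-1},\bar\xi_{-1}>0$,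 $\epsilon,\sigma\in(0,1)$, $\{\beta_k\}\subset(0,1]$, $\theta\ge0$, Lipschitz constants $L,\Gamma$): at iteration $k$, solve $\begin{bmatrix}H_k & J_k^T\\ J_k & 0\end{bmatrix}\begin{bmatrix}\bar d_k\\ \bar y_k\end{bmatrix}=-\begin{bmatrix}\bar g_k\\ c_k\end{bmatrix}$. Set $\bar\tau_k^{trial}=\infty$ if $\bar g_k^T\bar d_k+\max\{\bar d_k^TH_k\bar d_k,0\}\le0$, else $(1-\sigma)\|c_k\|_1/(\bar g_k^T\bar d_k+\max\{\bar d_k^TH_k\bar d_k,0\})$; $\bar\tau_k=\bar\tau_{k-1}$ if $\bar\tau_{k-1}\le\bar\tau_k^{trial}$, else $(1-\epsilon)\bar\tau_k^{trial}$. Set $\bar\xi_k^{trial}=\Delta q(x_k,\bar\tau_k,\bar g_k,H_k,\bar d_k)/(\bar\tau_k\|\bar d_k\|_2^2)$, $\bar\xi_k=\bar\xi_{k-1}$ if $\bar\xi_{k-1}\le\bar\xi_k^{trial}$, else $(1-\epsilon)\bar\xi_k^{trial}$. The stepsize $\bar\alpha_k$ is chosen (by projecting candidate values $\beta_k\Delta q(x_k,\bar\tau_k,\bar g_k,H_k,\bar d_k)/((\bar\tau_kL+\Gamma)\|\bar d_k\|_2^2)$ and that value minus $4\|c_k\|_1/((\bar\tau_kL+\Gamma)\|\bar d_k\|_2^2)$, and selecting among them or $1$) so that it always lies in $[\bar\alpha_{k,\min},\bar\alpha_{k,\max}]=[\beta_k\bar\xi_k\bar\tau_k/(\bar\tau_kL+\Gamma),\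 \beta_k\bar\xi_k\bar\tau_k/(\bar\tau_kL+\Gamma)+\theta\beta_k^2]$; $x_{k+1}=x_k+\bar\alpha_k\bar d_k$. The deterministic direction $d_k$ solves the same linear system with $g_k$ in place of $\bar g_k$, and $\tau_k^{trial}$ is the trial formula with $(g_k,d_k)$. Event $E_{\tau,small}$: there exist $\bar k_{\tau,\xi}\in\mathbb{N}$, $\bar\tau_{\min}>0$ with $\bar\tau_k=\bar\tau_{\min}\le\tau_k^{trial}$ and $\bar\xi_k=\bar\xi_{\min}$ for all $k\ge\bar k_{\tau,\xi}$; and $\mathbb{E}_k$ denotes expectation conditioned on this event and on the algorithm reaching $x_k$, with $\mathbb{E}_k[\bar g_k]=g_k$, $\mathbb{E}_k[\|\bar g_k-g_k\|_2^2]\le M$. $\kappa_d>0$ is an upper bound (independent of $k$) on the norm of the inverse of $\begin{bmatrix}H_k & J_k^T\\ J_k & 0\end{bmatrix}$, giving $\mathbb{E}_k[\|\bar d_k-d_k\|_2]\le\kappa_d\sqrt M$. *)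

(* Defs.v *)
From HB Require Import structures.
From mathcomp Require Import all_boot all_order all_algebra.
From mathcomp Require Import all_classical all_reals all_analysis.
Set Implicit Arguments. Unset Strict Implicit. Unset Printing Implicit Defensive.
Import Order.TTheory GRing.Theory Num.Theory.
Local Open Scope ring_scope.

Definition norm2 {R : realType} {n : nat} (v : 'cV[R]_n) : R :=
  Num.sqrt (\sum_(i < n) (v i 0) ^+ 2).

Definition norm1 {R : realType} {n : nat} (v : 'cV[R]_n) : R :=
  \sum_(i < n) `|v i 0|.

Definition dotv {R : realType} {n : nat} (u v : 'cV[R]_n) : R :=
  (u^T *m v) 0 0.

Definition kkt {R : realType} {n m : nat} (H : 'M[R]_n) (J : 'M[R]_(m, n))
  : 'M[R]_(n + m) := block_mx H J^T J 0.

Definition tau_trial {R : realType} {n m : nat} (sigma : R) (H : 'M[R]_n)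
  (c : 'cV[R]_m) (g d : 'cV[R]_n) : \bar R :=
  let den := dotv g d + Num.max (dotv d (H *m d)) 0 in
  if den <= 0 then +oo%E else (((1 - sigma) * norm1 c) / den)%:E.

(* Main.v *)
Require Import Defs.
From HB Require Import structures.
From mathcomp Require Import all_boot all_order all_algebra.
From mathcomp Require Import all_classical all_reals all_analysis.
From mathcomp Require Import ring lra.
Import Order.TTheory GRing.Theory Num.Theory.
Local Open Scope ring_scope.


Lemma norm2_ge0 {R : realType} {n : nat} (v : 'cV[R]_n) : 0 <= norm2 v.
Proof. exact: sqrtr_ge0. Qed.

Lemma norm2_sq {R : realType} {n : nat} (v : 'cV[R]_n) : norm2 v ^+ 2 = \sum_(i < n) v i 0 ^+ 2.
Proof. by rewrite /norm2 sqr_sqrtr // sumr_ge0 // => i _; exact: sqr_ge0. Qed.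

Lemma sum_col_mx {R : realType} {n m : nat} (a : 'cV[R]_n) (b : 'cV[R]_m) :
  \sum_(i < n + m) (col_mx a b) i 0 ^+ 2 =
  \sum_(i < n) a i 0 ^+ 2 + \sum_(i < m) b i 0 ^+ 2.
Proof.
rewrite big_split_ord /=; congr (_ + _); apply: eq_bigr => i _.
  by rewrite col_mxEu.
by rewrite col_mxEd.
Qed.

Lemma norm2_col0 {R : realType} {n m : nat} (v : 'cV[R]_n) : norm2 (col_mx v (0 : 'cV[R]_m)) = norm2 v.
Proof.
rewrite /norm2 sum_col_mx [X in _ + X]big1 ?addr0 // => i _; by rewrite mxE expr0n.
Qed.

Lemma norm2_usub {R : realType} {n m : nat} (v : 'cV[R]_n) (z : 'cV[R]_m) : norm2 v <= norm2 (col_mx v z).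
Proof.
rewrite /norm2 sum_col_mx; apply: ler_wsqrtr; rewrite lerDl sumr_ge0 // => i _.
exact: sqr_ge0.
Qed.

Lemma norm2N {R : realType} {n : nat} (v : 'cV[R]_n) : norm2 (- v) = norm2 v.
Proof. by rewrite /norm2; congr Num.sqrt; apply: eq_bigr => i _; rewrite mxE sqrrN. Qed.

Lemma dotv_bound {R : realType} {n : nat} (g u : 'cV[R]_n) (t : R) : 0 < t ->
  `|dotv g u| <= (t * norm2 g ^+ 2 + norm2 u ^+ 2 / t) / 2.
Proof.
move=> t0; rewrite /dotv mxE !norm2_sq.
have -> : (t * (\sum_(i < n) g i 0 ^+ 2) + (\sum_(i < n) u i 0 ^+ 2) / t) / 2
   = \sum_(i < n) ((t * g i 0 ^+ 2 + u i 0 ^+ 2 / t) / 2).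
  by rewrite mulr_sumr mulr_suml -big_split mulr_suml.
apply: (le_trans (ler_norm_sum _ _ _)); apply: ler_sum => i _.
rewrite mxE.
have tn : t != 0 by rewrite gt_eqF.
set a := g i 0; set b := u i 0.
rewrite normrM.
have : 0 <= (t * `|a| - `|b|) ^+ 2 / t by rewrite divr_ge0 // ?sqr_ge0 ?ltW.
rewrite -(real_normK (num_real a)) -(real_normK (num_real b)).
set x := `|a|; set y := `|b|.
move=> h.
have e : (t * x - y) ^+ 2 / t = t * x ^+ 2 - 2 * x * y + y ^+ 2 / t.
  by field.
rewrite e in h; lra.
Qed.

Lemma final_arith {R : realType} (B kg kd r e : R) : 0 <= B -> 0 < kg -> 0 < kd -> 0 <= r -> 0 < e ->
  exists t, 0 < t /\ B * ((t * kg ^+ 2 + kd ^+ 2 * r ^+ 2 / t) / 2) <= B * kg * kd * r + e.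
Proof.
move=> B0 kg0 kd0 r0 e0.
pose s := 2 * e / (B * kg + 1).
have Bk1 : 0 < B * kg + 1 by have := mulr_ge0 B0 (ltW kg0); lra.
have s0 : 0 < s by rewrite /s divr_gt0 //; lra.
have Bs : B * kg * s / 2 <= e.
  have es : s * (B * kg + 1) = 2 * e by rewrite /s; field; rewrite gt_eqF.
  nra.
have kdr0 : 0 <= kd * r by rewrite mulr_ge0 // ltW.
have ks0 : 0 < kd * r + s by lra.
exists ((kd * r + s) / kg); split; first by rewrite divr_gt0.
have e1 : (kd * r + s) / kg * kg ^+ 2 = kg * (kd * r + s).
  by field; rewrite gt_eqF.
have e2 : kd ^+ 2 * r ^+ 2 / ((kd * r + s) / kg) = kg * ((kd * r) ^+ 2 / (kd * r + s)).
  by field; rewrite !gt_eqF.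
have e3 : (kd * r) ^+ 2 / (kd * r + s) <= kd * r.
  by rewrite ler_pdivrMr //; nra.
rewrite e1 e2.
have : kg * ((kd * r) ^+ 2 / (kd * r + s)) <= kg * (kd * r) by rewrite ler_pM2l.
move=> h.
have h2 : (kg * (kd * r + s) + kg * ((kd * r) ^+ 2 / (kd * r + s))) / 2 <= kg * (kd * r) + kg * s / 2 by lra.
apply: le_trans (ler_wpM2l B0 h2) _.
nra.
Qed.

Theorem lemma3p10
  (R : realType) (dsp : measure_display) (Omega : measurableType dsp)
  (P : probability Omega R)
  (n m : nat)
  (* deterministic data at iterate x_k *)
  (H : 'M[R]_n) (J : 'M[R]_(m, n)) (g : 'cV[R]_n) (c : 'cV[R]_m)
  (kappaH zeta kappag kappad M L Gamma sigma beta theta taumin ximin : R)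
  (* deterministic search direction d_k (and multiplier y_k) *)
  (d : 'cV[R]_n) (y : 'cV[R]_m)
  (* stochastic quantities at iteration k *)
  (gbar : Omega -> 'cV[R]_n) (dbar : Omega -> 'cV[R]_n) (ybar : Omega -> 'cV[R]_m)
  (taubar xibar alphabar : Omega -> R) :
  (* standing assumptions on H_k, J_k *)
  H^T = H ->
  (forall u : 'cV[R]_n, norm2 (H *m u) <= kappaH * norm2 u) ->
  0 < zeta ->
  (forall u : 'cV[R]_n, J *m u = 0 -> zeta * norm2 u ^+ 2 <= dotv u (H *m u)) ->
  row_free J ->
  (* kappa_d bounds the (operator 2-)norm of the inverse of the KKT matrix *)
  kkt H J \in unitmx ->
  0 < kappad ->
  (forall z : 'cV[R]_(n + m), norm2 (invmx (kkt H J) *m z) <= kappad * norm2 z) ->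
  (* kappa_g bounds ||g_k||_2 *)
  0 < kappag -> norm2 g <= kappag ->
  (* algorithm parameters *)
  0 < L -> 0 <= Gamma -> 0 < sigma < 1 -> 0 < beta <= 1 -> 0 <= theta ->
  (* deterministic and stochastic directions solve the SQP linear systems *)
  kkt H J *m col_mx d y = - col_mx g c ->
  (forall w, kkt H J *m col_mx (dbar w) (ybar w) = - col_mx (gbar w) c) ->
  (* event E_{tau,small}, at an iteration k >= kbar_{tau,xi} *)
  0 < taumin -> 0 < ximin ->
  (taumin%:E <= tau_trial sigma H c g d)%E ->
  (forall w, taubar w = taumin) ->
  (forall w, xibar w = ximin) ->
  (* stepsize lies in [alpha_min, alpha_max] *)
  measurable_fun setT alphabar ->
  (forall w, beta * xibar w * taubar w / (taubar w * L + Gamma) <= alphabar w) ->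
  (forall w, alphabar w <= beta * xibar w * taubar w / (taubar w * L + Gamma)
                            + theta * beta ^+ 2) ->
  (* conditional moments of the stochastic gradient *)
  (forall i, measurable_fun setT (fun w => gbar w i 0)) ->
  (forall i, P.-integrable setT (fun w => (gbar w i 0)%:E)) ->
  (forall i, (\int[P]_w (gbar w i 0)%:E = (g i 0)%:E)%E) ->
  0 <= M ->
  (\int[P]_w ((norm2 (gbar w - g)) ^+ 2)%:E <= M%:E)%E ->
  (\int[P]_w (alphabar w * taubar w * dotv g (dbar w - d))%:E
     <= (beta ^+ 2 * theta * taumin * kappag * kappad * Num.sqrt M)%:E)%E.
Proof.
move=> HT hHb zeta0 hzeta rfJ Kunit kd0 hK kg0 hg L0 G0 sig01 beta01 th0 hd hdbar
  tau0 xi0 htt htau hxi malpha hal1 hal2 mgb igb egb M0 hM.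
pose K := invmx (kkt H J).
have colE : forall w, col_mx (dbar w - d) (ybar w - y) = K *m (- col_mx (gbar w - g) 0).
  move=> w.
  have e1 : col_mx (dbar w) (ybar w) = K *m (- col_mx (gbar w) c) by rewrite -(hdbar w) mulKmx.
  have e0 : col_mx d y = K *m (- col_mx g c) by rewrite -hd mulKmx.
  rewrite -[dbar w - d]/(dbar w + - d) -[ybar w - y]/(ybar w + - y).
  rewrite -add_col_mx -opp_col_mx e1 e0 -mulmxBr.
  congr (K *m _).
  have -> : col_mx (gbar w - g) 0 = col_mx (gbar w) c - col_mx g c.
    by rewrite opp_col_mx add_col_mx subrr.
  by rewrite opprK opprB addrC.
have hu : forall w, norm2 (dbar w - d) <= kappad * norm2 (gbar w - g).
  move=> w; apply: (le_trans (norm2_usub (dbar w - d) (ybar w - y))).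
  by rewrite colE; apply: (le_trans (hK _)); rewrite norm2N norm2_col0.
pose a := - (g^T *m lsubmx (usubmx K)).
have hlin : forall w, dotv g (dbar w - d) = \sum_(j < n) a 0 j * (gbar w j 0 - g j 0).
  move=> w.
  have -> : dbar w - d = lsubmx (usubmx K) *m (- (gbar w - g)).
    rewrite -[dbar w - d](col_mxKu _ (ybar w - y)) colE -mul_usub_mx.
    rewrite -[usubmx K]hsubmxK opp_col_mx oppr0 mul_row_col mulmx0 addr0.
    by rewrite hsubmxK.
  rewrite /dotv !mulmxN mulmxA -mulNmx mxE; apply: eq_bigr => j _.
  by rewrite !mxE.
pose h := fun w => \sum_(j < n) a 0 j * (gbar w j 0 - g j 0).
pose hq := fun w => \sum_(i < n) (gbar w i 0 - g i 0) ^+ 2.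
have hqE : forall w, norm2 (gbar w - g) ^+ 2 = hq w.
  by move=> w; rewrite norm2_sq; apply: eq_bigr => i _; rewrite !mxE.
have hq0 : forall w, 0 <= hq w by move=> w; rewrite -hqE sqr_ge0.
have mT : measurable (setT : set Omega) by [].
have hEfun : (fun w => (h w)%:E) =
    (fun w => \sum_(j < n) ((a 0 j)%:E * ((gbar w j 0)%:E - (g j 0)%:E)))%E.
  apply/funext => w; rewrite /h -sumEFin; apply: eq_bigr => j _ /=.
  by rewrite EFinM EFinB.
have intj : forall j : 'I_n, P.-integrable setT
    (fun w => ((a 0 j)%:E * ((gbar w j 0)%:E - (g j 0)%:E)))%E.
  move=> j; apply: integrableZl => //; apply: integrableB => //.
  exact: finite_measure_integrable_cst.
have hint : P.-integrable setT (fun w => (h w)%:E).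
  by rewrite hEfun; apply: integrable_sum => // j _; exact: intj.
have hint0 : (\int[P]_w (h w)%:E = 0)%E.
  rewrite hEfun (integral_sum mT intj); apply: big1 => j _.
  rewrite integralZl //; last first.
    by apply: integrableB => //; exact: finite_measure_integrable_cst.
  rewrite integralB_EFin //; [|exact: igb|exact: finite_measure_integrable_cst].
  have P1 : (P : measure Omega R) setT = 1%E by exact: probability_setT.
  by rewrite egb integral_cst // P1 mule1 subee // mule0.
have mh : measurable_fun setT h.
  by apply/measurable_realfun.measurable_EFinP; exact: measurable_int hint.
have mq : measurable_fun setT hq.
  apply: measurable_sum => i; apply: measurable_realfun.measurable_funX.
  by apply: measurable_realfun.measurable_funB => //; exact: measurable_cst.
have hM' : (\int[P]_w (hq w)%:E <= M%:E)%E.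
  have <- : (fun w => (norm2 (gbar w - g) ^+ 2)%:E) = (fun w => (hq w)%:E).
    by apply/funext => w; rewrite hqE.
  exact: hM.
have qint : P.-integrable setT (fun w => (hq w)%:E).
  apply/integrableP; split; first exact/measurable_realfun.measurable_EFinP.
  under eq_integral => w _ do rewrite abse_EFin (ger0_norm (hq0 w)).
  by apply: le_lt_trans hM' _; rewrite ltry.
pose a0 := beta * ximin * taumin / (taumin * L + Gamma).
have b0 : 0 < beta by case/andP: beta01.
have a00 : 0 <= a0.
  apply: divr_ge0; first by rewrite !mulr_ge0 // ltW.
  have := mulr_gt0 tau0 L0; lra.
have hal : forall w, a0 <= alphabar w <= a0 + theta * beta ^+ 2.
  move=> w; have := hal1 w; have := hal2 w; rewrite htau hxi => h2 h1.
  by apply/andP; split.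
pose B := theta * beta ^+ 2 * taumin.
have B0 : 0 <= B by rewrite /B mulr_ge0 // ?mulr_ge0 // ?exprn_ge0 // ltW.
have key : forall t, 0 < t -> (\int[P]_w (alphabar w * taumin * h w)%:E <=
    (B * ((t * kappag ^+ 2 + kappad ^+ 2 * M / t) / 2))%:E)%E.
  move=> t t0.
  pose c1 := B * (t * kappag ^+ 2) / 2.
  pose c2 := B * (kappad ^+ 2 / t) / 2.
  have c20 : 0 <= c2 by rewrite /c2 divr_ge0 // mulr_ge0 // divr_ge0 // ?sqr_ge0 // ltW.
  have hb : forall w, `|h w| <= (t * kappag ^+ 2 + kappad ^+ 2 * hq w / t) / 2.
    move=> w; rewrite /h -hlin. have hh := dotv_bound g (dbar w - d) t t0. apply: (le_trans hh).
    have g2 : norm2 g ^+ 2 <= kappag ^+ 2 by have := norm2_ge0 g; nra.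
    have u2 : norm2 (dbar w - d) ^+ 2 <= kappad ^+ 2 * hq w.
      rewrite -hqE; have := hu w; have := norm2_ge0 (dbar w - d).
      have := norm2_ge0 (gbar w - g); nra.
    have : norm2 (dbar w - d) ^+ 2 / t <= kappad ^+ 2 * hq w / t.
      by apply: ler_wpM2r => //; rewrite invr_ge0 ltW.
    have : t * norm2 g ^+ 2 <= t * kappag ^+ 2 by apply: ler_wpM2l => //; exact: ltW.
    lra.
  have fpt : forall w, alphabar w * taumin * h w <= a0 * taumin * h w + (c1 + c2 * hq w).
    move=> w; have /andP[l1 l2] := hal w.
    have e1 : alphabar w * taumin * h w - a0 * taumin * h w
        = ((alphabar w - a0) * taumin) * h w by ring.
    have s1 : ((alphabar w - a0) * taumin) * h w <= ((alphabar w - a0) * taumin) * `|h w|.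
      apply: ler_wpM2l; last exact: ler_norm.
      by apply: mulr_ge0; [rewrite subr_ge0 | exact: ltW].
    have s2 : ((alphabar w - a0) * taumin) * `|h w| <= B * `|h w|.
      apply: ler_wpM2r => //; rewrite /B; apply: ler_wpM2r; [exact: ltW | lra].
    have s3 : B * `|h w| <= B * ((t * kappag ^+ 2 + kappad ^+ 2 * hq w / t) / 2).
      exact: ler_wpM2l.
    have e2 : B * ((t * kappag ^+ 2 + kappad ^+ 2 * hq w / t) / 2) = c1 + c2 * hq w.
      by rewrite /c1 /c2; field; rewrite gt_eqF.
    lra.
  have fint : P.-integrable setT (fun w => (alphabar w * taumin * h w)%:E).
    apply: (le_integrable _ _ _ (integrableZl _ ((a0 + theta * beta ^+ 2) * taumin) hint)) => //.
    - apply/measurable_realfun.measurable_EFinP.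
      apply: measurable_realfun.measurable_funM => //.
      apply: measurable_realfun.measurable_funM => //; exact: measurable_cst.
    - move=> w _; rewrite -EFinM !abse_EFin lee_fin !normrM.
      apply: ler_wpM2r => //; have /andP[l1 l2] := hal w.
      rewrite !ger0_norm //; try apply: mulr_ge0; try lra.
      by apply: ler_wpM2r; [exact: ltW | lra].
  have Gint : P.-integrable setT (fun w => ((a0 * taumin)%:E * (h w)%:E
      + ((EFin \o cst c1) w + c2%:E * (hq w)%:E))%E).
    apply: integrableD => //; first exact: integrableZl.
    apply: integrableD => //; first exact: finite_measure_integrable_cst.
    exact: integrableZl.
  apply: (le_trans (le_integral _ fint Gint _)) => //.
    move=> w _ /=; rewrite -!EFinM -!EFinD lee_fin; exact: fpt.
  rewrite integralD //; [|exact: integrableZl|]; last first.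
    apply: integrableD => //; first exact: finite_measure_integrable_cst.
    exact: integrableZl.
  rewrite integralD //; [|exact: finite_measure_integrable_cst|exact: integrableZl].
  have P1 : (P : measure Omega R) setT = 1%E by exact: probability_setT.
  rewrite integralZl // hint0 mule0 add0e.
  have e3 : (\int[P]_x (EFin \o cst c1) x = c1%:E)%E.
    transitivity (\int[P]_x (cst c1%:E) x)%E; first by [].
    by rewrite integral_cst // P1 mule1.
  rewrite e3 (integralZl mT qint).
  apply: (@le_trans _ _ (c1%:E + c2%:E * M%:E)%E).
    by rewrite leeD2l // lee_wpmul2l // lee_fin.
  rewrite -EFinM -EFinD lee_fin le_eqVlt; apply/orP; left; apply/eqP.
  by rewrite /c1 /c2; field; rewrite gt_eqF.
have -> : (fun w => (alphabar w * taubar w * dotv g (dbar w - d))%:E)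
    = (fun w => (alphabar w * taumin * h w)%:E).
  by apply/funext => w; rewrite htau hlin.
apply/lee_addgt0Pr => e e0.
have [t [t0 ht]] := final_arith B kappag kappad (Num.sqrt M) e B0 kg0 kd0 (sqrtr_ge0 M) e0.
rewrite sqr_sqrtr // in ht.
apply: (le_trans (key t t0)).
rewrite -EFinD lee_fin; apply: (le_trans ht).
rewrite le_eqVlt; apply/orP; left; apply/eqP; rewrite /B; ring.
Qed.
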